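(* Let $\Bbbk$ be an algebraically closed field of characteristic zero and let $\mathcal{V}$ be the Virasoro algebra over $\Bbbk$. Let $M$ be a simple weight $\mathcal{V}$-module and let $\mu\in\Bbbk$ be such that $\dim M_\mu<\infty$ and $\dim M_{\mu+i}=\infty$ for every $i\in\mathbb{Z}\setminus\{0\}$. Then $\mu\in\{-1,0,1\}$.
   Context: The Virasoro algebra $\mathcal{V}$ over $\Bbbk$ has basis consisting of a central element $c$ and elements $e_i$, $i\in\mathbb{Z}$, with bracket $[e_i,e_j]=(j-i)e_{i+j}+\delta_{i,-j}\frac{i^3-i}{12}c$. A weight $\mathcal{V}$-module is a module on which $e_0$ and $c$ act diagonalizably; $M_\lambda=\{m\in M: e_0m=\lambda m\}$. *)

(* Defs.v *)
From HB Require Import structures.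
From mathcomp Require Import all_boot all_order all_algebra.
Set Implicit Arguments. Unset Strict Implicit. Unset Printing Implicit Defensive.
Import Order.TTheory GRing.Theory Num.Theory.
Local Open Scope ring_scope.

(* A module over the Virasoro algebra (basis c, e_i (i in Z)) on a k-vector space V
   is given by the actions E i of e_i and C of c, which are k-linear maps satisfying
   [e_i, e_j] = (j - i) e_{i+j} + delta_{i,-j} (i^3 - i)/12 c  and  [c, e_i] = 0. *)
Definition vir_module (k : fieldType) (V : lmodType k)
  (E : int -> V -> V) (C : V -> V) : Prop :=
  [/\ (forall i, linear (E i)), linear C,
      (forall (i j : int) (v : V),
         E i (E j v) - E j (E i v) =
           (j - i)%:~R *: E (i + j) v
           + (if i + j == 0 then (i%:~R ^+ 3 - i%:~R) / 12%:R else 0) *: C v)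
    & (forall (i : int) (v : V), C (E i v) = E i (C v))].

Definition vir_submodule (k : fieldType) (V : lmodType k)
  (E : int -> V -> V) (C : V -> V) (S : pred V) : Prop :=
  [/\ S 0, (forall (a : k) u v, S u -> S v -> S (a *: u + v)),
      (forall i v, S v -> S (E i v)) & (forall v, S v -> S (C v))].

Definition vir_simple (k : fieldType) (V : lmodType k)
  (E : int -> V -> V) (C : V -> V) : Prop :=
  (exists v : V, v != 0) /\
  forall S : pred V, vir_submodule E C S ->
    (forall v, S v -> v = 0) \/ (forall v, S v).

Definition diagonalizable (k : fieldType) (V : lmodType k) (f : V -> V) : Prop :=
  forall v : V, exists s : seq (k * V),
    (forall p, p \in s -> f p.2 = p.1 *: p.2) /\ v = \sum_(p <- s) p.2.

Definition vir_weight (k : fieldType) (V : lmodType k)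
  (E : int -> V -> V) (C : V -> V) : Prop :=
  diagonalizable (E 0) /\ diagonalizable C.

Definition weight_space (k : fieldType) (V : lmodType k)
  (E : int -> V -> V) (lam : k) : pred V :=
  fun v => E 0 v == lam *: v.

Definition fin_dim (k : fieldType) (V : lmodType k) (S : pred V) : Prop :=
  exists s : seq V, forall v, S v ->
    exists a : 'I_(size s) -> k, v = \sum_(i < size s) a i *: s`_i.

(* Main.v *)
Require Import Defs.
From HB Require Import structures.
From mathcomp Require Import all_boot all_order all_algebra.
From mathcomp Require Import ring zify.
From Stdlib Require Import Classical ClassicalEpsilon.
Import Order.TTheory GRing.Theory Num.Theory.
Local Open Scope ring_scope.
Lemma linD {k : fieldType} {V : lmodType k} {f : V -> V} : linear f ->
  forall u v, f (u + v) = f u + f v.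
Proof. move=> hf u v. by have := hf 1 u v; rewrite !scale1r. Qed.

Lemma lin0 {k : fieldType} {V : lmodType k} {f : V -> V} : linear f -> f 0 = 0.
Proof. move=> hf. have h := linD hf 0 0. rewrite addr0 in h. by apply: (addrI (f 0)); rewrite addr0 -h. Qed.

Lemma linZ {k : fieldType} {V : lmodType k} {f : V -> V} : linear f ->
  forall a v, f (a *: v) = a *: f v.
Proof. move=> hf a v. by have := hf a v 0; rewrite (lin0 hf) !addr0. Qed.

Lemma linN {k : fieldType} {V : lmodType k} {f : V -> V} : linear f ->
  forall v, f (- v) = - f v.
Proof. move=> hf v. by rewrite -scaleN1r linZ // scaleN1r. Qed.

Lemma linB {k : fieldType} {V : lmodType k} {f : V -> V} : linear f ->
  forall u v, f (u - v) = f u - f v.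
Proof. move=> hf u v. by rewrite linD // linN. Qed.

Lemma brk {k : fieldType} {V : lmodType k} {E : int -> V -> V} {C : V -> V} :
  vir_module E C -> forall (i j : int) v, i + j != 0 ->
  E i (E j v) - E j (E i v) = (j - i)%:~R *: E (i + j) v.
Proof. case=> _ _ hb _ i j v hij. by rewrite hb (negbTE hij) scale0r addr0. Qed.

Lemma wshift {k : fieldType} {V : lmodType k} {E : int -> V -> V} {C : V -> V} :
  vir_module E C -> forall (i : int) (a : k) v, E 0 v = a *: v ->
  E 0 (E i v) = (a + i%:~R) *: E i v.
Proof.
case=> hl _ hb _ i a v hv.
have := hb 0 i v. rewrite add0r subr0 hv linZ // => /eqP.
rewrite subr_eq => /eqP ->.
have -> : ((0 : int)%:~R ^+ 3 - (0 : int)%:~R) / 12%:R = 0 :> k by rewrite /= expr0n /= subr0 mul0r.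
by rewrite if_same scale0r addr0 scalerDl addrC.
Qed.


Lemma br_m11 {k : fieldType} {V : lmodType k} {E : int -> V -> V} {C : V -> V} :
  vir_module E C -> forall v, E (-1) (E 1 v) = E 1 (E (-1) v) + 2%:R *: E 0 v.
Proof.
case=> _ _ hb _ v. have := hb (-1) 1 v.
have -> : (-1 + 1 : int) = 0 by [].
have -> : ((-1 : int)%:~R ^+ 3 - (-1 : int)%:~R) / 12%:R = 0 :> k by rewrite /=; ring.
rewrite eqxx scale0r addr0 => /eqP. rewrite subr_eq => /eqP ->.
by rewrite addrC.
Qed.

Lemma br_m21 {k : fieldType} {V : lmodType k} {E : int -> V -> V} {C : V -> V} :
  vir_module E C -> forall v, E (-2) (E 1 v) = E 1 (E (-2) v) + 3%:R *: E (-1) v.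
Proof.
move=> hm v. have := brk hm (-2) 1 v isT. move/eqP. rewrite subr_eq => /eqP ->.
by rewrite addrC.
Qed.

Lemma br_m2m1 {k : fieldType} {V : lmodType k} {E : int -> V -> V} {C : V -> V} :
  vir_module E C -> forall v, E (-3) v = E (-2) (E (-1) v) - E (-1) (E (-2) v).
Proof. move=> hm v. by rewrite (brk hm (-2) (-1) v isT) /= scale1r. Qed.

Lemma br_m3m1 {k : fieldType} {V : lmodType k} {E : int -> V -> V} {C : V -> V} :
  vir_module E C -> forall v, 2%:R *: E (-4) v = E (-3) (E (-1) v) - E (-1) (E (-3) v).
Proof. move=> hm v. by rewrite (brk hm (-3) (-1) v isT). Qed.

Lemma br_m2m3 {k : fieldType} {V : lmodType k} {E : int -> V -> V} {C : V -> V} :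
  vir_module E C -> forall v, E (-2) (E (-3) v) - E (-3) (E (-2) v) = - E (-5) v.
Proof. move=> hm v. by rewrite (brk hm (-2) (-3) v isT) /= scaleN1r. Qed.

Lemma br_m1m4 {k : fieldType} {V : lmodType k} {E : int -> V -> V} {C : V -> V} :
  vir_module E C -> forall v, E (-1) (E (-4) v) - E (-4) (E (-1) v) = - (3%:R *: E (-5) v).
Proof. move=> hm v. by rewrite (brk hm (-1) (-4) v isT) /= scaleNr. Qed.


Lemma core {k : fieldType} {V : lmodType k} {E : int -> V -> V} {C : V -> V} :
  [pchar k] =i pred0 -> vir_module E C -> forall (lam : k) y, E 0 y = lam *: y -> E (-1) y = 0 ->
  E (-2) (E 1 y) = 0 ->
  (48%:R * lam * (lam - 1) * (lam - 2)) *: E (-2) y = 0.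
Proof.
move=> hch hm lam y hy A1 A2.
have hc := (pcharf0P _).1 hch.
have hl : forall i, linear (E i) by case: hm.
set z1 := E 1 y. set z2 := E 1 z1. set z3 := E 1 z2. set w := E (-2) y.
have {}A2 : E (-2) z1 = 0 := A2.
have W1 : E 0 z1 = (lam + 1) *: z1 by rewrite /z1 (wshift hm 1 lam y hy).
have W2 : E 0 z2 = (lam + 2%:R) *: z2.
  by rewrite /z2 (wshift hm 1 _ _ W1) -addrA.
have F1 : E (-1) z1 = (2%:R * lam) *: y.
  by rewrite /z1 (br_m11 hm) A1 (lin0 (hl 1)) add0r hy scalerA.
have F2 : E (-1) z2 = (4%:R * lam + 2%:R) *: z1.
  rewrite /z2 (br_m11 hm) F1 (linZ (hl 1)) W1 scalerA -scalerDl. congr (_ *: _). ring.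
have F3 : E (-1) z3 = (6%:R * lam + 6%:R) *: z2.
  rewrite /z3 (br_m11 hm) F2 (linZ (hl 1)) W2 scalerA -scalerDl. congr (_ *: _). ring.
have G2 : E (-2) z2 = (6%:R * lam) *: y.
  rewrite /z2 (br_m21 hm) A2 (lin0 (hl 1)) add0r F1 scalerA. congr (_ *: _). ring.
have G3 : E (-2) z3 = (18%:R * lam + 6%:R) *: z1.
  rewrite /z3 (br_m21 hm) G2 (linZ (hl 1)) F2 scalerA -scalerDl. congr (_ *: _). ring.
have H1 : E (-3) z1 = (2%:R * lam) *: w.
  by rewrite (br_m2m1 hm) F1 A2 (lin0 (hl (-1))) subr0 (linZ (hl (-2))).
have H2 : E (-3) z2 = 0.
  by rewrite (br_m2m1 hm) F2 G2 !(linZ (hl _)) A2 A1 !scaler0 subr0.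
have H3 : E (-3) z3 = (24%:R * lam) *: y.
  rewrite (br_m2m1 hm) F3 G3 !(linZ (hl _)) G2 F1 !scalerA -scalerBl. congr (_ *: _). ring.
have I3 : E (-4) z3 = 0.
  have := br_m3m1 hm z3. rewrite F3 H3 !(linZ (hl _)) H2 A1 !scaler0 subrr => /eqP.
  by rewrite scaler_eq0 hc /= => /eqP.
have I2 : 2%:R *: E (-4) z2 = ((4%:R * lam + 2%:R) * (2%:R * lam)) *: w.
  rewrite (br_m3m1 hm) F2 H2 (lin0 (hl (-1))) subr0 (linZ (hl _)) H1 scalerA //.
have J1 : - E (-5) z3 = ((24%:R * lam) - (18%:R * lam + 6%:R) * (2%:R * lam)) *: w.
  rewrite -(br_m2m3 hm) H3 G3 !(linZ (hl _)) H1 !scalerA -scalerBl //.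
have J2 : - (3%:R *: E (-5) z3) = - ((6%:R * lam + 6%:R) *: E (-4) z2).
  by rewrite -(br_m1m4 hm) I3 (lin0 (hl (-1))) F3 (linZ (hl _)) sub0r.
set a := (24%:R * lam) - (18%:R * lam + 6%:R) * (2%:R * lam).
set b := (4%:R * lam + 2%:R) * (2%:R * lam).
have hX : E (-5) z3 = - (a *: w) by rewrite -J1 opprK.
have hY : 3%:R *: E (-5) z3 = (6%:R * lam + 6%:R) *: E (-4) z2 by apply: oppr_inj.
have e1 : (6%:R : k) *: E (-5) z3 = ((6%:R * lam + 6%:R) * b) *: w.
  transitivity ((2%:R : k) *: (3%:R *: E (-5) z3)).
    by rewrite scalerA; congr (_ *: _); ring.
  rewrite hY.
  transitivity ((6%:R * lam + 6%:R) *: ((2%:R : k) *: E (-4) z2)).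
    by rewrite !scalerA; congr (_ *: _); ring.
  by rewrite I2 scalerA.
have e2 : (6%:R : k) *: E (-5) z3 = (- (6%:R * a)) *: w.
  by rewrite hX scalerN scalerA scaleNr.
have -> : 48%:R * lam * (lam - 1) * (lam - 2) = (6%:R * lam + 6%:R) * b - (- (6%:R * a)).
  rewrite /a /b. ring.
by rewrite scalerBl -e1 -e2 subrr.
Qed.


Lemma neg_all {k : fieldType} {V : lmodType k} {E : int -> V -> V} {C : V -> V} :
  [pchar k] =i pred0 -> vir_module E C -> forall y,
  E (-1) y = 0 -> E (-2) y = 0 -> forall n : nat, E (- (n.+1)%:Z) y = 0.
Proof.
move=> hch hm y h1 h2. have hc := (pcharf0P _).1 hch.
have hl : forall i, linear (E i) by case: hm.
elim=> [|n IH]; first by [].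
case: n IH => [|n] IH; first by [].
have := brk hm (- (n.+2)%:Z) (-1) y isT.
rewrite h1 IH (lin0 (hl _)) (lin0 (hl _)) subrr.
have -> : (-1 - - (n.+2)%:Z) = (n.+1)%:Z by lia.
have -> : (- (n.+2)%:Z + -1) = - (n.+3)%:Z by lia.
move/eqP; rewrite eq_sym scaler_eq0 => /orP [|/eqP //].
by rewrite /= hc.
Qed.

Inductive Gen {k : fieldType} {V : lmodType k} (E : int -> V -> V) (C : V -> V) (y : V) : V -> Prop :=
| Gen0 : Gen E C y y
| GenE : forall (p : nat) m, Gen E C y m -> Gen E C y (E (p.+1)%:Z m)
| GenC : forall m, Gen E C y m -> Gen E C y (C m).

Inductive Sp {k : fieldType} {V : lmodType k} (P : V -> Prop) : V -> Prop :=
| Sp0 : Sp P 0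
| SpS : forall a m v, P m -> Sp P v -> Sp P (a *: m + v).

Lemma Sp_add {k : fieldType} {V : lmodType k} (P : V -> Prop) u v :
  Sp P u -> Sp P v -> Sp P (u + v).
Proof.
move=> hu hv; elim: hu => [|a m u' hm _ IH]; first by rewrite add0r.
by rewrite -addrA; apply: SpS.
Qed.

Lemma Sp_scale {k : fieldType} {V : lmodType k} (P : V -> Prop) b u :
  Sp P u -> Sp P (b *: u).
Proof.
elim=> [|a m u' hm _ IH]; first by rewrite scaler0; apply: Sp0.
by rewrite scalerDr scalerA; apply: SpS.
Qed.

Lemma Sp_gen {k : fieldType} {V : lmodType k} (P : V -> Prop) m : P m -> Sp P m.
Proof. move=> hm. rewrite -[m]addr0 -[m]scale1r. apply: SpS => //. exact: Sp0. Qed.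

Lemma Sp_map {k : fieldType} {V : lmodType k} (P : V -> Prop) (f : V -> V) u :
  linear f -> (forall m, P m -> Sp P (f m)) -> Sp P u -> Sp P (f u).
Proof.
move=> hf hP; elim=> [|a m u' hm _ IH]; first by rewrite (lin0 hf); apply: Sp0.
by rewrite (hf a m u'); apply: Sp_add => //; apply: Sp_scale; apply: hP.
Qed.

Lemma Gen_E {k : fieldType} {V : lmodType k} {E : int -> V -> V} {C : V -> V} :
  [pchar k] =i pred0 -> vir_module E C -> forall (lam : k) y,
  E 0 y = lam *: y -> E (-1) y = 0 -> E (-2) y = 0 ->
  forall m, Gen E C y m -> forall j, Sp (Gen E C y) (E j m).
Proof.
move=> hch hm lam y hy h1 h2 m; have hm' := hm; case: hm' => hl hlC hb hCE.
elim=> [|p m' gm IH|m' gm IH] j.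
- case: j => [[|p]|n].
  + by rewrite hy; apply: Sp_scale; apply: Sp_gen; apply: Gen0.
  + by apply: Sp_gen; apply: (GenE _ _ _ p); apply: Gen0.
  + rewrite NegzE (neg_all hch hm y h1 h2 n). exact: Sp0.
- have := hb j (p.+1)%:Z m'. move/eqP; rewrite subr_eq => /eqP ->.
  apply: Sp_add.
    apply: Sp_add; first by apply: Sp_scale; apply: IH.
    by apply: Sp_scale; apply: Sp_gen; apply: GenC.
  apply: (Sp_map _ _ _ (hl _) _ (IH j)) => m0 g0.
  by apply: Sp_gen; apply: GenE.
- rewrite -hCE. apply: (Sp_map _ _ _ hlC _ (IH j)) => m0 g0.
  by apply: Sp_gen; apply: GenC.
Qed.

Lemma Gen_eig {k : fieldType} {V : lmodType k} {E : int -> V -> V} {C : V -> V} :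
  vir_module E C -> forall (lam : k) y, E 0 y = lam *: y ->
  forall m, Gen E C y m -> exists d : nat, E 0 m = (lam + d%:R) *: m.
Proof.
move=> hm lam y hy m; have hm' := hm; case: hm' => hl hlC hb hCE.
elim=> [|p m' gm [d hd]|m' gm [d hd]].
- by exists 0%N; rewrite addr0.
- exists (d + p.+1)%N. rewrite (wshift hm _ _ _ hd) natrD addrA. done.
- exists d. by rewrite -hCE hd (linZ hlC).
Qed.

Fixpoint Qf {k : fieldType} {V : lmodType k} (f : V -> V) (lam : k) (N : nat) (v : V) : V :=
  match N with
  | O => v
  | S N' => f (Qf f lam N' v) - (lam + N'%:R) *: Qf f lam N' v
  end.

Lemma Qf_lin {k : fieldType} {V : lmodType k} (f : V -> V) (lam : k) N a u v :
  linear f -> Qf f lam N (a *: u + v) = a *: Qf f lam N u + Qf f lam N v.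
Proof.
move=> hf; elim: N => [//|N IH] /=.
rewrite IH (hf a) scalerDr scalerBr scalerA (mulrC _ a) -scalerA opprD addrACA. done.
Qed.

Lemma Qf0 {k : fieldType} {V : lmodType k} (f : V -> V) (lam : k) N :
  linear f -> Qf f lam N 0 = 0.
Proof. move=> hf; elim: N => [//|N IH] /=. by rewrite IH (lin0 hf) scaler0 subr0. Qed.

Lemma Qf_eig {k : fieldType} {V : lmodType k} (f : V -> V) (lam nu : k) v :
  linear f -> f v = nu *: v -> forall N,
  Qf f lam N v = (\prod_(i < N) (nu - (lam + i%:R))) *: v.
Proof.
move=> hf hv; elim=> [|N IH] /=; first by rewrite big_ord0 scale1r.
rewrite IH (linZ hf) hv big_ord_recr /= scalerA scalerA -scalerBl.
congr (_ *: _). ring.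
Qed.

Definition pb (P : Prop) : bool := if excluded_middle_informative P then true else false.
Lemma pbP (P : Prop) : pb P <-> P.
Proof. rewrite /pb; case: excluded_middle_informative => //. Qed.

Lemma lw_zero {k : fieldType} {V : lmodType k} {E : int -> V -> V} {C : V -> V} :
  [pchar k] =i pred0 -> vir_module E C -> vir_simple E C ->
  forall (lam : k) y, y != 0 -> E 0 y = lam *: y -> E (-1) y = 0 -> E (-2) y = 0 ->
  forall v, E 0 v = (lam - 2%:R) *: v -> v = 0.
Proof.
move=> hch hm hs lam y yn0 hy h1 h2 v hv.
have hc := (pcharf0P _).1 hch.
have hm' := hm; case: hm' => hl hlC hb hCE.
pose P := Sp (Gen E C y).
pose Pb : pred V := fun v => pb (P v).
have sub : vir_submodule E C Pb.
  split.
  - by apply/pbP; apply: Sp0.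
  - move=> a u w /pbP hu /pbP hw; apply/pbP. apply: Sp_add => //. exact: Sp_scale.
  - move=> i u /pbP hu; apply/pbP. apply: (Sp_map _ _ _ (hl i) _ hu) => m gm.
    exact: (Gen_E hch hm lam y hy h1 h2 m gm i).
  - move=> u /pbP hu; apply/pbP. apply: (Sp_map _ _ _ hlC _ hu) => m gm.
    by apply: Sp_gen; apply: GenC.
case: hs => _ /(_ Pb sub) [h0|hall].
  have : Pb y by apply/pbP; apply: Sp_gen; apply: Gen0.
  by move/h0 => /eqP; rewrite (negbTE yn0).
have Pv : P v by apply/pbP; apply: hall.
have [N hN] : exists N, forall M, (N <= M)%N -> Qf (E 0) lam M v = 0.
  elim: Pv => [|a m u gm _ [N hN]].
    by exists 0%N => M _; rewrite Qf0.
  have [d hd] := Gen_eig hm lam y hy m gm.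
  exists (maxn N d.+1) => M hM.
  rewrite Qf_lin // hN; last by apply: leq_trans hM; rewrite leq_maxl.
  rewrite (Qf_eig _ _ _ _ (hl 0) hd) addr0.
  have hdM : (d < M)%N by apply: leq_trans hM; rewrite leq_maxr.
  have -> : \prod_(i < M) (lam + d%:R - (lam + i%:R)) = 0.
    apply/eqP/prodf_eq0. exists (Ordinal hdM) => //=. by rewrite subrr.
  by rewrite !scale0r scaler0.
have := hN N (leqnn N). rewrite (Qf_eig _ _ _ _ (hl 0) hv).
move/eqP; rewrite scaler_eq0 => /orP [|/eqP //].
move=> /prodf_eq0 [i _]. 
have -> : lam - 2%:R - (lam + (i : nat)%:R) = - ((i : nat).+2)%:R.
  rewrite -addn2 natrD. ring.
by rewrite oppr_eq0 hc.
Qed.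


Definition inspan {k : fieldType} {V : lmodType k} (s : seq V) (v : V) : Prop :=
  exists a : 'I_(size s) -> k, v = \sum_(i < size s) a i *: s`_i.
Definition findim {k : fieldType} {V : lmodType k} (P : V -> Prop) : Prop :=
  exists s, forall v, P v -> inspan s v.
Definition subsp {k : fieldType} {V : lmodType k} (P : V -> Prop) : Prop :=
  P 0 /\ forall a u v, P u -> P v -> P (a *: u + v).

Lemma inspan0 {k : fieldType} {V : lmodType k} (s : seq V) : inspan s 0.
Proof. exists (fun _ => 0). by rewrite big1 // => i _; rewrite scale0r. Qed.

Lemma inspan_lin {k : fieldType} {V : lmodType k} (s : seq V) c u v :
  inspan s u -> inspan s v -> inspan s (c *: u + v).
Proof.
move=> [a ->] [b ->]. exists (fun i => c * a i + b i).
rewrite scaler_sumr -big_split /=. apply: eq_bigr => i _.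
by rewrite scalerA scalerDl.
Qed.

Lemma inspan_cons1 {k : fieldType} {V : lmodType k} (x : V) s v :
  inspan (x :: s) v -> exists b, inspan s (v - b *: x).
Proof.
move=> [a ->]. exists (a ord0). exists (fun i => a (lift ord0 i)).
by rewrite /= big_ord_recl /= (addrC (a ord0 *: x)) addrK.
Qed.

Lemma inspan_cons2 {k : fieldType} {V : lmodType k} (x : V) s v b :
  inspan s (v - b *: x) -> inspan (x :: s) v.
Proof.
move=> [a ha].
exists (fun i : 'I_(size s).+1 => if unlift ord0 i is Some j then a j else b).
rewrite /= big_ord_recl /= unlift_none.
have -> : \sum_(i < size s) (if unlift ord0 (lift ord0 i) is Some j then a j else b) *: (x :: s)`_(lift ord0 i)
        = \sum_(i < size s) a i *: s`_i.
  apply: eq_bigr => i _. by rewrite liftK.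
by rewrite -ha addrC subrK.
Qed.

Lemma notfin_nz {k : fieldType} {V : lmodType k} (P : V -> Prop) :
  ~ findim P -> exists v, P v /\ v <> 0.
Proof.
move=> nf. apply: NNPP => nex. apply: nf. exists [::] => v Pv.
have -> : v = 0 by apply: NNPP => vn0; apply: nex; exists v.
exact: inspan0.
Qed.

Lemma ker_nf {k : fieldType} {V : lmodType k} (f : V -> V) : linear f ->
  forall (s : seq V) (W : V -> Prop), subsp W -> (forall v, W v -> inspan s (f v)) ->
  ~ findim W -> ~ findim (fun v => W v /\ f v = 0).
Proof.
move=> hf; elim=> [|x s IH] W [W0 Wl] hWs nW.
  move=> [t ht]; apply: nW; exists t => v Wv; apply: ht; split => //.
  by have [a ->] := hWs v Wv; rewrite big_ord0.
case: (classic (forall v, W v -> inspan s (f v))) => [H|H].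
  by apply: IH.
have [w0 [Ww0 nw0]] : exists w0, W w0 /\ ~ inspan s (f w0).
  apply: NNPP => nex; apply: H => v Wv; apply: NNPP => nv; apply: nex; by exists v.
have [b0 hb0] := inspan_cons1 _ _ _ (hWs w0 Ww0).
have b0n0 : b0 != 0.
  apply/negP => /eqP b00; apply: nw0. by move: hb0; rewrite b00 scale0r subr0.
pose W' := fun v => W v /\ inspan s (f v).
have sW' : subsp W'.
  split; first by split => //; rewrite (lin0 hf); apply: inspan0.
  move=> a u v [Wu su] [Wv sv]; split; first by apply: Wl.
  by rewrite (hf a); apply: inspan_lin.
have nW' : ~ findim W'.
  move=> [t ht]; apply: nW; exists (w0 :: t) => v Wv.
  have [b hb] := inspan_cons1 _ _ _ (hWs v Wv).
  apply: (inspan_cons2 _ _ _ (b / b0)).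
  apply: ht; split.
    rewrite -scaleNr addrC; exact: Wl.
  have -> : f (v - (b / b0) *: w0) = (- (b / b0)) *: (f w0 - b0 *: x) + (f v - b *: x).
    rewrite (linB hf) (linZ hf) scalerBr scalerA scaleNr mulNr mulfVK //.
    by rewrite scaleNr opprK addrCA addrK.
  exact: inspan_lin.
move=> [t ht]; apply: (IH W' sW') => //.
  by move=> v [].
exists t => v [[Wv _] fv0]; apply: ht; by split.
Qed.

Theorem lemma3 (k : closedFieldType) (hchar : [pchar k] =i pred0)
  (V : lmodType k) (E : int -> V -> V) (C : V -> V)
  (hmod : vir_module E C) (hsimple : vir_simple E C) (hweight : vir_weight E C)
  (mu : k)
  (hfin : fin_dim (weight_space E mu))
  (hinf : forall i : int, i != 0 -> ~ fin_dim (weight_space E (mu + i%:~R))) :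
  mu = -1 \/ mu = 0 \/ mu = 1.
Proof.
case: (classic (mu = -1 \/ mu = 0 \/ mu = 1)) => // hmu; exfalso.
have hc := (pcharf0P _).1 hchar.
have hm' := hmod; case: hm' => hl hlC hb hCE.
set lam := mu + 1%:~R.
pose W0 := fun v => E 0 v = lam *: v.
have sW0 : subsp W0.
  split; first by rewrite /W0 (lin0 (hl 0)) scaler0.
  move=> a u v; rewrite /W0 => hu hv. by rewrite (hl 0) hu hv scalerA mulrC -scalerA scalerDr.
have nW0 : ~ findim W0.
  move=> [t ht]; apply: (hinf 1 isT); exists t => v /eqP hv; exact: ht.
have [s hs] : findim (fun v => E 0 v = mu *: v).
  case: hfin => s hs; exists s => v hv; apply: hs; exact/eqP.
have nW1 := ker_nf (E (-1)) (hl _) s W0 sW0.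
have nW1' : ~ findim (fun v => W0 v /\ E (-1) v = 0).
  apply: nW1 => // v hv; apply: hs.
  rewrite (wshift hmod _ _ _ hv) /lam. congr (_ *: _). rewrite /=. ring.
pose W1 := fun v => W0 v /\ E (-1) v = 0.
have sW1 : subsp W1.
  split; first by split; [case: sW0 | exact: (lin0 (hl _))].
  move=> a u v [hu1 hu2] [hv1 hv2]; split; first by case: sW0 => _; apply.
  by rewrite (hl _) hu2 hv2 scaler0 addr0.
have hf2 : linear (fun v => E (-2) (E 1 v)).
  by move=> a u v /=; rewrite (hl 1) (hl (-2)).
have nW2 := ker_nf (fun v => E (-2) (E 1 v)) hf2 s W1 sW1.
have nW2' : ~ findim (fun v => W1 v /\ E (-2) (E 1 v) = 0).
  apply: nW2 => //.
  - move=> v [hv _]; apply: hs.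
    rewrite (wshift hmod _ _ _ (wshift hmod _ _ _ hv)) /lam. congr (_ *: _). rewrite /=. ring.
have [y [[[hy h1] h2] yn0]] := notfin_nz _ nW2'.
have hw : E (-2) y = 0.
  have := core hchar hmod lam y hy h1 h2.
  move/eqP; rewrite scaler_eq0 => /orP [|/eqP //].
  have l0 : lam != 0.
    apply/negP => /eqP hl0; apply: hmu; left. apply/eqP. rewrite -subr_eq0 opprK.
    by rewrite /lam /= in hl0; rewrite hl0.
  have l1 : lam - 1 != 0.
    apply/negP => /eqP hl0; apply: hmu; right; left.
    by move: hl0; rewrite /lam /= addrK.
  have l2 : lam - 2%:R != 0.
    apply/negP => /eqP hl0; apply: hmu; right; right.
    apply/eqP; rewrite -subr_eq0; apply/eqP; rewrite -hl0 /lam /=. ring.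
  have n48 : (48%:R : k) != 0 by rewrite hc.
  by rewrite !mulf_eq0 (negbTE n48) (negbTE l0) (negbTE l1) (negbTE l2).
have yn0b : y != 0 by apply/eqP.
have z := lw_zero hchar hmod hsimple lam y yn0b hy h1 hw.
apply: (hinf (-1) isT). exists [::] => v /eqP hv.
exists (fun _ => 0). rewrite big_ord0. apply: z. rewrite hv /lam. congr (_ *: _). rewrite /=. ring.
Qed.
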